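(* Let $s\ge4$, $j\in\{s,\dots,p\}$, $M>0$, $\gamma\in(0,1)$ and $\tilde a=\sqrt{M^2/(2+\gamma^2)}$. Define $\beta^*=(\tfrac{\tilde a}{\sqrt{s-2}},\dots,\tfrac{\tilde a}{\sqrt{s-2}},\tilde a,0,\dots,0)+\tilde a\gamma e_j$ (first $s-2$ entries equal to $\tilde a/\sqrt{s-2}$, entry $s-1$ equal to $\tilde a$), $\Sigma_0=I_p-\gamma(e_{s-1}e_j^\top+e_je_{s-1}^\top)$, and $\beta_1=\beta^*-2\tilde a\gamma e_j$, $\Sigma_1=I_p+\gamma(e_{s-1}e_j^\top+e_je_{s-1}^\top)$. In the model where $x\sim N_p(0,\Sigma)$, $y=x^\top\beta+\varepsilon$ with $\varepsilon\sim N(0,\sigma_\varepsilon^2)$ independent, and each coordinate of $x$ is independently observed with probability $\rho_*$, let $p(y,x_{\mathrm{obs}};\beta,\Sigma)$ denote the joint likelihood of the observation pattern and the observed data $(y,x_{\mathrm{obs}})$. Then $p(y,x_{\mathrm{obs}};\beta^*,\Sigma_0)=p(y,x_{\mathrm{obs}};\beta_1,\Sigma_1)$ for every observation pattern in which $x_{s-1}$ and $x_j$ are not both observed (and all values of $y,x_{\mathrm{obs}}$).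
   Context: $e_k$ denotes the $k$-th standard basis vector of $\mathbb R^p$. The missingness is independent of $(x,\varepsilon)$. *)

(* Defs.v *)
From HB Require Import structures.
From mathcomp Require Import all_boot all_order all_algebra.
From mathcomp Require Import all_classical all_reals all_analysis.
Set Implicit Arguments. Unset Strict Implicit. Unset Printing Implicit Defensive.
Import Order.TTheory GRing.Theory Num.Theory.
Local Open Scope ring_scope.

(* Coordinates of R^p are 'I_p (0-based); the paper's 1-based index k
   corresponds to the ordinal with value k-1. *)

Definition ebasis (R : realType) (p k : nat) : 'cV[R]_p :=
  \col_(i < p) (if (i.+1 == k)%N then 1 else 0).

Definition Esym (R : realType) (p a b : nat) : 'M[R]_p :=
  ebasis R p a *m (ebasis R p b)^T + ebasis R p b *m (ebasis R p a)^T.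

Definition atil (R : realType) (M gamma : R) : R :=
  Num.sqrt (M ^+ 2 / (2 + gamma ^+ 2)).

Definition beta_star (R : realType) (p s j : nat) (M gamma : R) : 'cV[R]_p :=
  (\col_(i < p) (if (i.+1 <= s - 2)%N then atil M gamma / Num.sqrt (s - 2)%:R
                 else if (i.+1 == s - 1)%N then atil M gamma else 0))
  + (atil M gamma * gamma) *: ebasis R p j.

Definition Sigma0 (R : realType) (p s j : nat) (gamma : R) : 'M[R]_p :=
  1%:M - gamma *: Esym R p (s - 1) j.

Definition beta1 (R : realType) (p s j : nat) (M gamma : R) : 'cV[R]_p :=
  beta_star p s j M gamma - (2 * atil M gamma * gamma) *: ebasis R p j.

Definition Sigma1 (R : realType) (p s j : nat) (gamma : R) : 'M[R]_p :=
  1%:M + gamma *: Esym R p (s - 1) j.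

Definition obs_idx (p : nat) (O : {set 'I_p}) (i : 'I_#|O|) : 'I_p := enum_val i.

(* covariance matrix of (y, x_O) when x ~ N_p(0,Sigma), y = x^T beta + eps,
   eps ~ N(0, sigma^2) independent of x *)
Definition obs_cov (R : realType) (p : nat) (sigma : R) (beta : 'cV[R]_p)
    (Sigma : 'M[R]_p) (O : {set 'I_p}) : 'M[R]_(1 + #|O|) :=
  let v := Sigma *m beta in
  let vO : 'cV[R]_#|O| := \col_(i < #|O|) v (obs_idx i) ord0 in
  block_mx (beta^T *m Sigma *m beta + (sigma ^+ 2)%:M) vO^T
           vO (\matrix_(i < #|O|, k < #|O|) Sigma (obs_idx i) (obs_idx k)).

Definition gauss_density (R : realType) (n : nat) (C : 'M[R]_n) (z : 'cV[R]_n) : R :=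
  powR (2 * pi) (- (n%:R / 2)) * powR (\det C) (- (1 / 2))
  * expR (- ((z^T *m invmx C *m z) ord0 ord0 / 2)).

(* joint likelihood of the observation pattern O (each coordinate observed
   independently with probability rho) and of the observed data (y, x_O) *)
Definition likelihood (R : realType) (p : nat) (rho sigma : R)
    (beta : 'cV[R]_p) (Sigma : 'M[R]_p) (O : {set 'I_p})
    (y : R) (xO : 'cV[R]_#|O|) : R :=
  rho ^+ #|O| * (1 - rho) ^+ (p - #|O|)
  * gauss_density (obs_cov sigma beta Sigma O) (col_mx y%:M xO).

(* Main.v *)
Require Import Defs.
From HB Require Import structures.
From mathcomp Require Import all_boot all_order all_algebra.
From mathcomp Require Import all_classical all_reals all_analysis.
From mathcomp Require Import ring lra zify.
Import Order.TTheory GRing.Theory Num.Theory.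
Local Open Scope ring_scope.

Lemma eT_mul {R : realType} {p k} (X : 'cV[R]_p) {i : 'I_p} :
  i.+1 = k -> (ebasis R p k)^T *m X = (X i 0)%:M.
Proof.
move=> hi; apply/matrixP => a b; rewrite !ord1 !mxE (bigD1 i) //= big1.
  by rewrite !mxE hi eqxx mul1r addr0.
move=> i' hi'; rewrite !mxE; case: eqP => [h|]; last by rewrite mul0r.
by exfalso; move/eqP: hi'; apply; apply/val_inj; move: h; rewrite -hi => -[].
Qed.

Lemma Esym_at (R : realType) p a b (x y : 'I_p) :
  Esym R p a b x y = ((x.+1 == a) && (y.+1 == b))%:R + ((x.+1 == b) && (y.+1 == a))%:R.
Proof.
rewrite /Esym !mxE !big_ord1 !mxE.
by do 4 case: eqP => _ /=; rewrite ?mulr1 ?mulr0 ?mul0r.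
Qed.

Lemma S0_at (R : realType) p s j (g : R) (x y : 'I_p) :
  Sigma0 p s j g x y = (x == y)%:R - g * Esym R p (s - 1) j x y.
Proof. rewrite /Sigma0; move: (Esym _ _ _ _) => E; by rewrite !mxE. Qed.

Lemma S1_at (R : realType) p s j (g : R) (x y : 'I_p) :
  Sigma1 p s j g x y = (x == y)%:R + g * Esym R p (s - 1) j x y.
Proof. rewrite /Sigma1; move: (Esym _ _ _ _) => E; by rewrite !mxE. Qed.

Theorem lemma8 (R : realType) (p s j : nat) (M gamma rho sigma : R)
  (hs : (4 <= s)%N) (hsj : (s <= j)%N) (hjp : (j <= p)%N)
  (hM : 0 < M) (hg0 : 0 < gamma) (hg1 : gamma < 1)
  (hsig : 0 < sigma) (hr0 : 0 <= rho) (hr1 : rho <= 1)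
  (O : {set 'I_p})
  (hO : ~ ((exists2 i : 'I_p, i \in O & (i.+1 = s - 1)%N) /\
           (exists2 i : 'I_p, i \in O & (i.+1 = j)%N)))
  (y : R) (xO : 'cV[R]_#|O|) :
  likelihood rho sigma (beta_star p s j M gamma) (Sigma0 p s j gamma) y xO
  = likelihood rho sigma (beta1 p s j M gamma) (Sigma1 p s j gamma) y xO.
Proof.
have lte : (s - 2 < p)%N by lia.
have ltf : (j - 1 < p)%N by lia.
pose ie : 'I_p := Ordinal lte.
pose jf : 'I_p := Ordinal ltf.
have ie1 : ie.+1 = (s - 1)%N by rewrite /= ; lia.
have jf1 : jf.+1 = j by rewrite /=; lia.
set a := atil M gamma.
set b : 'cV[R]_p := \col_(i < p) (if (i.+1 <= s - 2)%N then a / Num.sqrt (s - 2)%:R else if (i.+1 == s - 1)%N then a else 0).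
set e := ebasis R p (s - 1).
set f := ebasis R p j.
have bf : b jf 0 = 0.
  rewrite /b mxE /=; case: ifP => [|_]; first lia.
  case: ifP => //; lia.
have be : b ie 0 = a.
  rewrite /b mxE /=; case: ifP => [|_]; first lia.
  case: ifP => //; lia.
have ef : e jf 0 = 0 by rewrite /e mxE; case: eqP => //= ; lia.
have fe : f ie 0 = 0 by rewrite /f mxE; case: eqP => //= ; lia.
have ff : f jf 0 = 1 by rewrite /f mxE; case: eqP => //= ; lia.
have ee : e ie 0 = 1 by rewrite /e mxE; case: eqP => //= ; lia.
have bs : beta_star p s j M gamma = b + (a * gamma) *: f by [].
have b1 : beta1 p s j M gamma = b - (a * gamma) *: f.
  rewrite /beta1 bs; apply/matrixP => u v; rewrite !mxE -/a. ring.
have bsf : beta_star p s j M gamma jf 0 = a * gamma.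
  by rewrite bs mxE [X in _ + X]mxE bf ff; ring.
have bse : beta_star p s j M gamma ie 0 = a.
  by rewrite bs mxE [X in _ + X]mxE be fe; ring.
have b1f : beta1 p s j M gamma jf 0 = - (a * gamma).
  by rewrite b1 mxE [X in _ + X]mxE [X in - X]mxE bf ff; ring.
have b1e : beta1 p s j M gamma ie 0 = a.
  by rewrite b1 mxE [X in _ + X]mxE [X in - X]mxE be fe; ring.
set v := b - (a * gamma ^+ 2) *: e.
have hv0 : Sigma0 p s j gamma *m beta_star p s j M gamma = v.
  rewrite /Sigma0 /Esym mulmxBl mul1mx -scalemxAl mulmxDl -!mulmxA.
  rewrite -/e -/f (eT_mul _ jf1) (eT_mul _ ie1) !mul_mx_scalar bsf bse bs.
  apply/matrixP => u w; rewrite /v !mxE -/a; ring.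
have hv1 : Sigma1 p s j gamma *m beta1 p s j M gamma = v.
  rewrite /Sigma1 /Esym mulmxDl mul1mx -scalemxAl mulmxDl -!mulmxA.
  rewrite -/e -/f (eT_mul _ jf1) (eT_mul _ ie1) !mul_mx_scalar b1f b1e b1.
  apply/matrixP => u w; rewrite /v !mxE; rewrite -/a; ring.
have fv : f^T *m v = 0.
  rewrite (eT_mul _ jf1) /v mxE [X in _ + X]mxE [X in - X]mxE bf ef.
  by rewrite mulr0 oppr0 addr0; apply/matrixP => u w; rewrite !mxE mul0rn.
have hq : (beta_star p s j M gamma)^T *m Sigma0 p s j gamma *m beta_star p s j M gamma
   = (beta1 p s j M gamma)^T *m Sigma1 p s j gamma *m beta1 p s j M gamma.
  rewrite -!mulmxA hv0 hv1 bs b1 [(b + _)^T]linearD [(b - _)^T]linearB /= !linearZ /= !mulmxDl -!scalemxAl mulNmx fv oppr0 !scaler0 //.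
have hS : \matrix_(i < #|O|, k < #|O|) Sigma0 p s j gamma (obs_idx i) (obs_idx k)
   = \matrix_(i < #|O|, k < #|O|) Sigma1 p s j gamma (obs_idx i) (obs_idx k).
  apply/matrixP => u w; rewrite [LHS]mxE [RHS]mxE S0_at S1_at !Esym_at.
  have iu : obs_idx u \in O by rewrite /obs_idx; exact: enum_valP.
  have iw : obs_idx w \in O by rewrite /obs_idx; exact: enum_valP.
  have -> : ((obs_idx u).+1 == (s - 1)%N) && ((obs_idx w).+1 == j) = false.
    apply/negbTE/negP => /andP[/eqP h1 /eqP h2]; apply: hO; split; [exists (obs_idx u) | exists (obs_idx w)]; done.
  have -> : ((obs_idx u).+1 == j) && ((obs_idx w).+1 == (s - 1)%N) = false.
    apply/negbTE/negP => /andP[/eqP h1 /eqP h2]; apply: hO; split; [exists (obs_idx w) | exists (obs_idx u)]; done.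
  by rewrite addr0 mulr0 subr0 addr0.
rewrite /likelihood /obs_cov /= hq hS; have E : Sigma0 p s j gamma *m beta_star p s j M gamma = Sigma1 p s j gamma *m beta1 p s j M gamma by rewrite hv0 hv1.
by rewrite E.
Qed.
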